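(* Let $k$ be a positive integer, $a\in\mathbb C\setminus\mathbb Z_0^-$, and let $s\in\mathbb C$ be arbitrary when $|z|<1$, or $\Re(s)>k$ when $|z|=1$. Then $$\Phi_k(z,s,a)=\frac1{a^s}+\sum_{r=0}^{k-1}\binom{k}{r} z^{k-r}\,\Phi_{k-r}\bigl(z,s,a+(k-r)\bigr).$$
   Context: $\mathbb Z_0^-=\{0,-1,-2,\ldots\}$. The multiple Hurwitz-Lerch zeta function of order $k$ is $\Phi_k(z,s,a)=\sum_{m_1,\ldots,m_k=0}^\infty\frac{z^{m_1+\dots+m_k}}{(m_1+\dots+m_k+a)^{s}}$ for $a\in\mathbb C\setminus\mathbb Z_0^-$, with $s\in\mathbb C$ when $|z|<1$ and $\Re(s)>k$ when $|z|=1$. *)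

(* Defs.v *)
From Stdlib Require Import Reals.
From Coquelicot Require Import Coquelicot.
Open Scope C_scope.

Fixpoint csum (N : nat) (f : nat -> C) : C :=
  match N with
  | O => 0
  | S n => csum n f + f n
  end.

(* Principal argument in (-PI, PI] (junk value at 0). *)
Definition Carg (w : C) : R :=
  if Rle_dec 0 (Im w) then acos (Re w / Cmod w) else (- acos (Re w / Cmod w))%R.

Definition Clog (w : C) : C := (ln (Cmod w), Carg w).

Definition Cexp (w : C) : C := (exp (Re w) * cos (Im w), exp (Re w) * sin (Im w))%R.

Definition Cpowc (w s : C) : C := Cexp (s * Clog w).

Definition Clim (u : nat -> C) : C :=
  (real (Lim_seq (fun N => Re (u N))), real (Lim_seq (fun N => Im (u N)))).

(* boxsum k N g = sum over (m_1,...,m_k) in {0,...,N-1}^k of g (m_1+...+m_k). *)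
Fixpoint boxsum (k N : nat) (g : nat -> C) : C :=
  match k with
  | O => g O
  | S k' => csum N (fun m => boxsum k' N (fun t => g (m + t)%nat))
  end.

(* Multiple Hurwitz-Lerch zeta function of order k:
   sum_{m_1,...,m_k >= 0} z^(m_1+...+m_k) / (m_1+...+m_k+a)^s,
   as the limit of the partial sums over the boxes {0,...,N-1}^k. *)
Definition Phi (k : nat) (z s a : C) : C :=
  Clim (fun N => boxsum k N (fun n => Cpow z n / Cpowc (RtoC (INR n) + a) s)).

(* Main.v *)
Require Import Defs.
From Stdlib Require Import Reals Lia Lra Binomial.
From Coquelicot Require Import Coquelicot.
Open Scope C_scope.

Lemma csum_ext_lt n f g : (forall i, (i < n)%nat -> f i = g i) -> csum n f = csum n g.
Proof. induction n; simpl; intros H; auto. rewrite IHn by (intros; apply H; lia). rewrite H by lia; auto. Qed.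

Lemma csum_ext n f g : (forall i, f i = g i) -> csum n f = csum n g.
Proof. intros; apply csum_ext_lt; auto. Qed.

Lemma csum_plus n f g : csum n (fun i => f i + g i) = csum n f + csum n g.
Proof. induction n; simpl. ring. rewrite IHn; ring. Qed.

Lemma csum_scal n c f : csum n (fun i => c * f i) = c * csum n f.
Proof. induction n; simpl. ring. rewrite IHn; ring. Qed.

Lemma csum_shift n f : csum (S n) f = f O + csum n (fun i => f (S i)).
Proof. induction n. simpl; ring. change (csum (S (S n)) f) with (csum (S n) f + f (S n)).
 rewrite IHn; simpl; ring. Qed.

Lemma csum_swap n p F : csum n (fun m => csum p (fun j => F m j)) = csum p (fun j => csum n (fun m => F m j)).
Proof. induction n; simpl. induction p; simpl; auto. rewrite <- IHp; ring.
 rewrite IHn. rewrite <- csum_plus. auto. Qed.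

Lemma csum_split n d f : csum (n + d) f = csum n f + csum d (fun i => f (n + i)%nat).
Proof. induction d; simpl. rewrite Nat.add_0_r; ring. rewrite Nat.add_succ_r; simpl. rewrite IHd; ring. Qed.

Lemma csum_reverse n f : csum n f = csum n (fun i => f (n - 1 - i)%nat).
Proof.
 induction n; auto.
 rewrite (csum_shift n (fun i => f (S n - 1 - i)%nat)).
 change (csum (S n) f) with (csum n f + f n).
 rewrite IHn. replace (S n - 1 - 0)%nat with n by lia.
 rewrite (Cplus_comm (f n)). f_equal. apply csum_ext_lt; intros; f_equal; lia.
Qed.

Lemma csum_rev k F : csum (S k) F = F O + csum k (fun r => F (k - r)%nat).
Proof.
 rewrite csum_shift. f_equal. rewrite csum_reverse.
 apply csum_ext_lt; intros; f_equal; lia.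
Qed.

Lemma boxsum_ext k N g h : (forall t, g t = h t) -> boxsum k N g = boxsum k N h.
Proof. revert g h; induction k; intros g h H; simpl; auto.
 apply csum_ext; intros; apply IHk; auto. Qed.

Lemma boxsum_scal k N c g : boxsum k N (fun t => c * g t) = c * boxsum k N g.
Proof. revert g; induction k; intros g; simpl; auto.
 rewrite <- csum_scal. apply csum_ext; intros; apply IHk. Qed.

Lemma pascal_comb k (X : nat -> C) :
  csum (S k) (fun j => RtoC (Binomial.C k j) * X j)
  + csum (S k) (fun j => RtoC (Binomial.C k j) * X (S j))
  = csum (S (S k)) (fun j => RtoC (Binomial.C (S k) j) * X j).
Proof.
 rewrite (csum_shift k). rewrite (csum_shift (S k)).
 change (csum (S k) (fun j => RtoC (Binomial.C k j) * X (S j))) with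
   (csum k (fun j => RtoC (Binomial.C k j) * X (S j)) + RtoC (Binomial.C k k) * X (S k)).
 change (csum (S k) (fun i => RtoC (Binomial.C (S k) (S i)) * X (S i))) with
   (csum k (fun i => RtoC (Binomial.C (S k) (S i)) * X (S i)) + RtoC (Binomial.C (S k) (S k)) * X (S k)).
 rewrite !C_n_0, !C_n_n.
 rewrite (csum_ext_lt k (fun i => RtoC (Binomial.C (S k) (S i)) * X (S i))
   (fun i => RtoC (Binomial.C k (S i)) * X (S i) + RtoC (Binomial.C k i) * X (S i))).
 2:{ intros i Hi. rewrite <- pascal by lia. rewrite RtoC_plus. ring. }
 rewrite csum_plus. ring.
Qed.

Lemma box_identity k N g :
  boxsum k (S N) g = csum (S k) (fun j => RtoC (Binomial.C k j) * boxsum j N (fun t => g (t + j)%nat)).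
Proof.
 revert g; induction k; intros g.
 - simpl. rewrite C_n_0. ring.
 - change (boxsum (S k) (S N) g) with (csum (S N) (fun m => boxsum k (S N) (fun t => g (m + t)%nat))).
   rewrite csum_shift. rewrite IHk.
   rewrite (csum_ext N _ (fun m => csum (S k) (fun j => RtoC (Binomial.C k j) *
         boxsum j N (fun t => g (S m + (t + j))%nat)))).
   2:{ intros m. rewrite IHk. auto. }
   rewrite csum_swap.
   rewrite (csum_ext (S k) (fun j => csum N _) (fun j => RtoC (Binomial.C k j) * boxsum (S j) N (fun t => g (t + S j)%nat))).
   2:{ intros j. simpl. rewrite <- csum_scal. apply csum_ext; intros m.
       f_equal. apply boxsum_ext; intros t. f_equal. lia. }
   rewrite (csum_ext (S k) (fun j => RtoC (Binomial.C k j) * boxsum j N (fun t => g (0 + (t + j))%nat))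
     (fun j => RtoC (Binomial.C k j) * boxsum j N (fun t => g (t + j)%nat))).
   2:{ intros j. f_equal. }
   apply (pascal_comb k (fun j => boxsum j N (fun t => g (t + j)%nat))).
Qed.

Open Scope R_scope.
Fixpoint rcsum (N : nat) (f : nat -> R) : R :=
  match N with O => 0 | S n => rcsum n f + f n end.
Fixpoint rboxsum (k N : nat) (g : nat -> R) : R :=
  match k with
  | O => g O
  | S k' => rcsum N (fun m => rboxsum k' N (fun t => g (m + t)%nat))
  end.

Lemma rcsum_le n f g : (forall i, (i < n)%nat -> f i <= g i) -> rcsum n f <= rcsum n g.
Proof. induction n; simpl; intros; try lra. assert (f n <= g n) by (apply H; lia).
 assert (rcsum n f <= rcsum n g) by (apply IHn; intros; apply H; lia). lra. Qed.

Lemma rcsum_split n d f : rcsum (n + d) f = rcsum n f + rcsum d (fun i => f (n + i)%nat).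
Proof. induction d; simpl. rewrite Nat.add_0_r; ring. rewrite Nat.add_succ_r; simpl. rewrite IHd; ring. Qed.

Lemma rcsum_scal n c f : rcsum n (fun i => c * f i) = c * rcsum n f.
Proof. induction n; simpl. ring. rewrite IHn; ring. Qed.

Lemma rcsum_minus n f g : rcsum n (fun i => f i - g i) = rcsum n f - rcsum n g.
Proof. induction n; simpl. ring. rewrite IHn; ring. Qed.

Lemma Cmod_csum n f : Cmod (csum n f) <= rcsum n (fun i => Cmod (f i)).
Proof. induction n; simpl. rewrite Cmod_0; lra.
 eapply Rle_trans. apply Cmod_triangle. lra. Qed.

Lemma csum_minus n f g : (csum n f - csum n g = csum n (fun i => f i - g i))%C.
Proof. induction n; simpl. ring. rewrite <- IHn; ring. Qed.

Lemma box_I0 k N g h : (forall n, Cmod (g n) <= h n) -> Cmod (boxsum k N g) <= rboxsum k N h.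
Proof. revert g h; induction k; intros g h H; simpl; auto.
 eapply Rle_trans. apply Cmod_csum. apply rcsum_le; intros. apply IHk; auto. Qed.

Lemma box_I1 k N d g h : (forall n, Cmod (g n) <= h n) ->
  Cmod (boxsum k (N + d) g - boxsum k N g) <= rboxsum k (N + d) h - rboxsum k N h.
Proof. revert g h; induction k; intros g h H; simpl.
 - replace (g O - g O)%C with (RtoC 0) by (apply injective_projections; simpl; ring).
   rewrite Cmod_0; lra.
 - rewrite csum_split, rcsum_split.
   replace (csum N (fun m => boxsum k (N + d) (fun t => g (m + t)%nat)) +
      csum d (fun i => boxsum k (N + d) (fun t => g (N + i + t)%nat)) -
      csum N (fun m => boxsum k N (fun t => g (m + t)%nat)))%C with
     (csum N (fun m => boxsum k (N + d) (fun t => g (m + t)%nat) - boxsum k N (fun t => g (m + t)%nat)) +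
      csum d (fun i => boxsum k (N + d) (fun t => g (N + i + t)%nat)))%C
   by (rewrite <- csum_minus; ring).
   eapply Rle_trans. apply Cmod_triangle.
   assert (A1 := Cmod_csum N (fun m => boxsum k (N + d) (fun t => g (m + t)%nat) - boxsum k N (fun t => g (m + t)%nat))%C).
   assert (A2 := Cmod_csum d (fun i => boxsum k (N + d) (fun t => g (N + i + t)%nat))).
   assert (B1 : rcsum N (fun m => Cmod (boxsum k (N + d) (fun t => g (m + t)%nat) - boxsum k N (fun t => g (m + t)%nat))%C)
     <= rcsum N (fun m => rboxsum k (N + d) (fun t => h (m + t)%nat) - rboxsum k N (fun t => h (m + t)%nat))).
   { apply rcsum_le; intros. apply IHk; auto. }
   assert (B2 : rcsum d (fun i => Cmod (boxsum k (N + d) (fun t => g (N + i + t)%nat)))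
     <= rcsum d (fun i => rboxsum k (N + d) (fun t => h (N + i + t)%nat))).
   { apply rcsum_le; intros. apply box_I0; auto. }
   rewrite rcsum_minus in B1. lra.
Qed.

Lemma box_bound k (u : nat -> R) U (w : nat -> nat -> R) :
  (forall m, 0 <= u m) -> (forall N, rcsum N u <= U) ->
  (forall j m t, w (S j) (m + t)%nat <= u m * w j t) -> w O O <= 1 ->
  forall N c h, 0 <= c -> (forall t, h t <= c * w k t) -> rboxsum k N h <= c * U ^ k.
Proof.
 intros Hu HU Hw H0 N.
 assert (U0 : 0 <= U) by (apply (HU O)).
 induction k; intros c h Hc Hh; simpl.
 - specialize (Hh O). nra.
 - apply Rle_trans with (rcsum N (fun m => (c * U ^ k) * u m)).
   + apply rcsum_le; intros m _. 
     apply Rle_trans with ((c * u m) * U ^ k); [| lra].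
     apply IHk. specialize (Hu m); nra.
     intros t. eapply Rle_trans. apply Hh. specialize (Hw k m t). rewrite Rmult_assoc. apply Rmult_le_compat_l; auto.
   + rewrite rcsum_scal. specialize (HU N). assert (0 <= U ^ k) by (apply pow_le; auto).
     assert (0 <= c * U ^ k) by nra. nra.
Qed.

Definition Ccv (u : nat -> C) (l : C) :=
  is_lim_seq (fun N => Re (u N)) (Re l) /\ is_lim_seq (fun N => Im (u N)) (Im l).

Lemma Im_le_Cmod c : Rabs (Im c) <= Cmod c.
Proof. destruct c as [a b]. unfold Cmod; simpl. rewrite <- sqrt_Rsqr_abs.
 apply sqrt_le_1_alt. unfold Rsqr. nra. Qed.

Lemma comp_cv (f : C -> R) k g h Bd :
  (forall x, Rabs (f x) <= Cmod x) -> (forall x y, f (x - y)%C = f x - f y) ->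
  (forall n, Cmod (g n) <= h n) -> (forall N, rboxsum k N h <= Bd) ->
  exists l : R, is_lim_seq (fun N => f (boxsum k N g)) l.
Proof.
 intros Hf Hlin Hg HB.
 assert (Inc : forall N, Cmod (boxsum k (S N) g - boxsum k N g) <= rboxsum k (S N) h - rboxsum k N h).
 { intros N. rewrite <- Nat.add_1_r. apply box_I1; auto. }
 assert (E1 : ex_finite_lim_seq (fun N => rboxsum k N h)).
 { apply ex_finite_lim_seq_incr with Bd; auto. intros n. specialize (Inc n).
   assert (0 <= Cmod (boxsum k (S n) g - boxsum k n g)) by apply Cmod_ge_0. lra. }
 assert (E2 : ex_finite_lim_seq (fun N => f (boxsum k N g) + rboxsum k N h)).
 { apply ex_finite_lim_seq_incr with (2 * Bd).
   - intros n. specialize (Inc n). specialize (Hf (boxsum k (S n) g - boxsum k n g)%C).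
     rewrite Hlin in Hf. apply Rabs_le_between in Hf. lra.
   - intros n. specialize (Hf (boxsum k n g)). apply Rabs_le_between in Hf.
     assert (Cmod (boxsum k n g) <= rboxsum k n h) by (apply box_I0; auto).
     specialize (HB n). lra. }
 destruct E1 as [l1 H1]. destruct E2 as [l2 H2].
 exists (l2 - l1).
 eapply is_lim_seq_ext. 2: apply (is_lim_seq_minus' _ _ _ _ H2 H1).
 intros n; simpl; ring.
Qed.

Lemma box_cv k g h Bd :
  (forall n, Cmod (g n) <= h n) -> (forall N, rboxsum k N h <= Bd) ->
  exists l, Ccv (fun N => boxsum k N g) l.
Proof.
 intros Hg HB.
 assert (L1 : forall x y, Re (x - y)%C = Re x - Re y) by (intros [] []; simpl; ring).
 assert (L2 : forall x y, Im (x - y)%C = Im x - Im y) by (intros [] []; simpl; ring).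
 destruct (comp_cv Re k g h Bd re_le_Cmod L1 Hg HB) as [l1 H1].
 destruct (comp_cv Im k g h Bd Im_le_Cmod L2 Hg HB) as [l2 H2].
 exists (l1, l2); split; auto.
Qed.

Lemma Cmod_Cexp v : Cmod (Cexp v) = exp (Re v).
Proof. unfold Cexp, Cmod; simpl.
 transitivity (sqrt (exp (Re v) ^ 2)); [f_equal | apply sqrt_pow2; left; apply exp_pos].
 assert (H := sin2_cos2 (Im v)). unfold Rsqr in H.
 transitivity (exp (Re v) ^ 2 * (sin (Im v) * sin (Im v) + cos (Im v) * cos (Im v))); [ring | rewrite H; ring].
Qed.

Lemma exp_mono x y : x <= y -> exp x <= exp y.
Proof. intros [H|H]. left; apply exp_increasing; auto. subst; lra. Qed.

Lemma Cmod_Cpowc w s : Cmod (Cpowc w s) = exp (Re s * ln (Cmod w) - Im s * Carg w).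
Proof. unfold Cpowc. rewrite Cmod_Cexp. unfold Clog. destruct s; simpl. ring_simplify. auto. Qed.

Lemma Cpowc_nz w s : Cpowc w s <> RtoC 0.
Proof. intros H. assert (Cmod (Cpowc w s) = 0) by (rewrite H; apply Cmod_0).
 rewrite Cmod_Cpowc in H0. generalize (exp_pos (Re s * ln (Cmod w) - Im s * Carg w)); lra. Qed.

Lemma Carg_bound w : Rabs (Carg w) <= PI.
Proof. unfold Carg. destruct (Rle_dec 0 (Im w)).
 - destruct (acos_bound (Re w / Cmod w)). rewrite Rabs_right; lra.
 - destruct (acos_bound (Re w / Cmod w)). rewrite Rabs_Ropp, Rabs_right; lra. Qed.

Lemma fin_min T (f : nat -> R) : (forall t, 0 < f t) -> exists d, 0 < d /\ forall t, (t < T)%nat -> d <= f t.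
Proof. intros Hf. induction T.
 - exists 1; split; [lra | intros; lia].
 - destruct IHT as [d [Hd H]]. exists (Rmin d (f T)). split.
   + apply Rmin_pos; auto.
   + intros t Ht. destruct (Nat.eq_dec t T).
     * subst. apply Rmin_r.
     * eapply Rle_trans. apply Rmin_l. apply H; lia.
Qed.

Lemma valid_pos b : (forall n, b <> RtoC (- INR n)) -> forall t, 0 < Cmod (RtoC (INR t) + b).
Proof. intros Hb t. apply Cmod_gt_0. intros H. apply (Hb t).
 apply injective_projections; simpl.
 - apply (f_equal fst) in H; simpl in H. lra.
 - apply (f_equal snd) in H; simpl in H. lra. Qed.

Lemma valid_upper b t : Cmod (RtoC (INR t) + b) <= (1 + Cmod b) * (INR t + 1).
Proof. eapply Rle_trans. apply Cmod_triangle. rewrite Cmod_R, Rabs_right.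
 2: apply Rle_ge, pos_INR. assert (0 <= INR t) by apply pos_INR.
 assert (0 <= Cmod b) by apply Cmod_ge_0. nra. Qed.

Lemma valid_lower b : (forall n, b <> RtoC (- INR n)) ->
  exists d, 0 < d /\ forall t, d * (INR t + 1) <= Cmod (RtoC (INR t) + b).
Proof.
 intros Hb. destruct (INR_archimed 1 (2 * Cmod b + 1)) as [T HT]; [lra|].
 destruct (fin_min T (fun t => Cmod (RtoC (INR t) + b) / (INR t + 1))) as [d [Hd H]].
 { intros t. apply Rdiv_lt_0_compat. apply valid_pos; auto. generalize (pos_INR t); lra. }
 exists (Rmin d (1/2)). split. apply Rmin_pos; lra.
 intros t. assert (0 <= INR t) by apply pos_INR.
 destruct (Nat.lt_ge_cases t T) as [Ht | Ht].
 - specialize (H t Ht). simpl in H.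
   apply Rle_trans with (d * (INR t + 1)).
   + apply Rmult_le_compat_r. lra. apply Rmin_l.
   + apply Rmult_le_reg_r with (/ (INR t + 1)). apply Rinv_0_lt_compat; lra.
     rewrite Rmult_assoc, Rinv_r by lra. unfold Rdiv in H. lra.
 - apply le_INR in Ht. 
   assert (Cmod (RtoC (INR t)) <= Cmod (RtoC (INR t) + b) + Cmod b).
   { replace (RtoC (INR t)) with ((RtoC (INR t) + b) + - b)%C at 1 by ring.
     eapply Rle_trans. apply Cmod_triangle. rewrite Cmod_opp. lra. }
   rewrite Cmod_R, Rabs_right in H1 by lra.
   apply Rle_trans with (1/2 * (INR t + 1)).
   + apply Rmult_le_compat_r. lra. apply Rmin_r.
   + lra.
Qed.

Lemma valid_log b : (forall n, b <> RtoC (- INR n)) ->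
  exists D, forall t, Rabs (ln (Cmod (RtoC (INR t) + b)) - ln (INR t + 1)) <= D.
Proof.
 intros Hb. destruct (valid_lower b Hb) as [d [Hd H]].
 exists (Rabs (ln d) + Rabs (ln (1 + Cmod b))). intros t.
 assert (0 <= INR t) by apply pos_INR. assert (0 <= Cmod b) by apply Cmod_ge_0.
 assert (P := valid_pos b Hb t).
 assert (L1 : ln (d * (INR t + 1)) <= ln (Cmod (RtoC (INR t) + b))) by (apply ln_le; auto; nra).
 assert (L2 : ln (Cmod (RtoC (INR t) + b)) <= ln ((1 + Cmod b) * (INR t + 1))) by (apply ln_le; auto; apply valid_upper).
 rewrite ln_mult in L1, L2 by lra.
 apply Rabs_le_between. split.
 - generalize (Rle_abs (- ln d)). rewrite Rabs_Ropp. generalize (Rabs_pos (ln (1 + Cmod b))). lra.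
 - generalize (Rle_abs (ln (1 + Cmod b))). generalize (Rabs_pos (ln d)). lra.
Qed.

Lemma g_bound z s b : (forall n, b <> RtoC (- INR n)) ->
  exists K, 0 <= K /\ forall t, Cmod (Cpow z t / Cpowc (RtoC (INR t) + b) s)%C
     <= K * (Cmod z ^ t * exp (- Re s * ln (INR t + 1))).
Proof.
 intros Hb. destruct (valid_log b Hb) as [D HD].
 exists (exp (Rabs (Re s) * D + Rabs (Im s) * PI)). split. left; apply exp_pos.
 intros t. rewrite Cmod_div by apply Cpowc_nz. rewrite Cmod_pow, Cmod_Cpowc.
 unfold Rdiv. rewrite <- exp_Ropp.
 set (L := ln (Cmod (RtoC (INR t) + b))).
 set (w := (RtoC (INR t) + b)%C).
 assert (E : exp (- (Re s * L - Im s * Carg w)) <= exp (Rabs (Re s) * D + Rabs (Im s) * PI) * exp (- Re s * ln (INR t + 1))).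
 { rewrite <- exp_plus. apply exp_mono.
   specialize (HD t). fold w in HD. fold L in HD.
   assert (A1 : - Re s * (L - ln (INR t + 1)) <= Rabs (Re s) * D).
   { eapply Rle_trans. apply Rle_abs. rewrite Rabs_mult, Rabs_Ropp.
     apply Rmult_le_compat_l; auto. apply Rabs_pos. }
   assert (A2 : Im s * Carg w <= Rabs (Im s) * PI).
   { eapply Rle_trans. apply Rle_abs. rewrite Rabs_mult.
     apply Rmult_le_compat_l. apply Rabs_pos. apply Carg_bound. }
   nra. }
 assert (0 <= Cmod z ^ t) by (apply pow_le; apply Cmod_ge_0).
 apply Rle_trans with (Cmod z ^ t * (exp (Rabs (Re s) * D + Rabs (Im s) * PI) * exp (- Re s * ln (INR t + 1)))).
 - apply Rmult_le_compat_l; auto.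
 - lra.
Qed.

Lemma ln_le_sub1 y : 0 < y -> ln y <= y - 1.
Proof. intros Hy. generalize (exp_ineq1_le (ln y)). rewrite exp_ln; lra. Qed.

Lemma ln_diff x y : 0 < x -> 0 < y -> ln y - ln x <= y / x - 1.
Proof. intros Hx Hy. replace (ln y - ln x) with (ln (y / x)).
 apply ln_le_sub1. apply Rdiv_lt_0_compat; auto.
 unfold Rdiv. rewrite ln_mult; [rewrite ln_Rinv; [ring|auto] | auto | apply Rinv_0_lt_compat; auto]. Qed.

Lemma geo_sum n q : 0 <= q < 1 -> rcsum n (fun i => q ^ i) <= 1 / (1 - q).
Proof. intros Hq. assert (forall n, rcsum n (fun i => q ^ i) * (1 - q) = 1 - q ^ n).
 { induction n0; simpl. ring. rewrite Rmult_plus_distr_r, IHn0. ring. }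
 specialize (H n). assert (0 <= q ^ n) by (apply pow_le; lra).
 apply Rmult_le_reg_r with (1 - q). lra. rewrite H. unfold Rdiv. rewrite Rmult_assoc, Rinv_l; lra. Qed.

Lemma rcsum_mono (u : nat -> R) n m : (forall i, 0 <= u i) -> (n <= m)%nat -> rcsum n u <= rcsum m u.
Proof. intros Hu H. induction H. lra. simpl. specialize (Hu m). lra. Qed.

Lemma ratio_sum (u : nat -> R) q M : (forall m, 0 <= u m) -> 0 <= q < 1 ->
  (forall m, (M <= m)%nat -> u (S m) <= q * u m) -> exists U, forall N, rcsum N u <= U.
Proof.
 intros Hu Hq Hr.
 assert (Hg : forall i, u (M + i)%nat <= u M * q ^ i).
 { induction i. simpl. rewrite Nat.add_0_r. lra.
   rewrite Nat.add_succ_r. eapply Rle_trans. apply Hr; lia. simpl. nra. }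
 exists (rcsum M u + u M * (1 / (1 - q))). intros N.
 apply Rle_trans with (rcsum (M + N) u).
 - apply rcsum_mono; auto; lia.
 - rewrite rcsum_split. apply Rplus_le_compat_l.
   apply Rle_trans with (rcsum N (fun i => u M * q ^ i)).
   apply rcsum_le; auto. rewrite rcsum_scal. apply Rmult_le_compat_l; auto. apply geo_sum; auto.
Qed.

Lemma pser_step p x : 1 < p -> 0 < x ->
  (p - 1) * exp (- p * ln (x + 1)) <= exp ((1 - p) * ln x) - exp ((1 - p) * ln (x + 1)).
Proof.
 intros Hp Hx.
 set (l := ln (x + 1)). set (l0 := ln x).
 assert (H1 : l0 - l <= - / (x + 1)).
 { unfold l, l0. generalize (ln_diff (x + 1) x ltac:(lra) Hx). intros H.
   replace (x / (x + 1) - 1) with (- / (x + 1)) in H. auto. field. lra. }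
 assert (E : exp ((1 - p) * l0) = exp ((1 - p) * l) * exp ((1 - p) * (l0 - l))).
 { rewrite <- exp_plus. f_equal. ring. }
 assert (H2 : (p - 1) * / (x + 1) <= (1 - p) * (l0 - l)) by nra.
 generalize (exp_ineq1_le ((1 - p) * (l0 - l))). intros H3.
 assert (E2 : exp (- p * l) = exp ((1 - p) * l) * / (x + 1)).
 { replace (- p * l) with ((1 - p) * l + - l) by ring. rewrite exp_plus, exp_Ropp.
   unfold l. rewrite exp_ln by lra. auto. }
 rewrite E, E2. assert (0 < exp ((1 - p) * l)) by apply exp_pos. nra.
Qed.

Lemma pser_sum p N : 1 < p -> rcsum N (fun m => exp (- p * ln (INR m + 1))) <= 1 + 1 / (p - 1).
Proof.
 intros Hp.
 assert (H : forall N, rcsum (S N) (fun m => exp (- p * ln (INR m + 1))) <=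
                1 + (1 - exp ((1 - p) * ln (INR N + 1))) / (p - 1)).
 { induction N0.
   - simpl. replace (0 + 1) with 1 by ring. rewrite Rplus_0_l, ln_1, !Rmult_0_r, exp_0. unfold Rdiv. lra.
   - change (rcsum (S (S N0)) (fun m => exp (- p * ln (INR m + 1)))) with
       (rcsum (S N0) (fun m => exp (- p * ln (INR m + 1))) + exp (- p * ln (INR (S N0) + 1))).
     generalize (pser_step p (INR N0 + 1) Hp ltac:(generalize (pos_INR N0); lra)). intros Hs.
     rewrite S_INR. 
     apply Rle_trans with (1 + (1 - exp ((1 - p) * ln (INR N0 + 1))) / (p - 1) +
        (exp ((1 - p) * ln (INR N0 + 1)) - exp ((1 - p) * ln (INR N0 + 1 + 1))) / (p - 1)).
     + apply Rplus_le_compat; auto. apply Rmult_le_reg_l with (p - 1). lra.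
       unfold Rdiv. field_simplify; lra.
     + unfold Rdiv. apply Req_le. field. lra. }
 destruct N. simpl. assert (0 < 1 / (p - 1)) by (apply Rdiv_lt_0_compat; lra). lra.
 eapply Rle_trans. apply H. generalize (exp_pos ((1 - p) * ln (INR N + 1))). intros.
 unfold Rdiv. assert (0 < / (p - 1)) by (apply Rinv_0_lt_compat; lra). nra.
Qed.

Lemma pgeo_sum r P : 0 <= r < 1 -> 0 <= P ->
  exists U, forall N, rcsum N (fun m => r ^ m * exp (P * ln (INR m + 1))) <= U.
Proof.
 intros Hr HP.
 assert (Hu : forall m, 0 <= r ^ m * exp (P * ln (INR m + 1))).
 { intros. apply Rmult_le_pos. apply pow_le; lra. left; apply exp_pos. }
 destruct (Req_dec r 0) as [R0|R0].
 - apply (ratio_sum _ 0 0); auto. lra. intros m _. subst r. simpl. lra.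
 - assert (Lr : ln r < 0). { rewrite <- ln_1. apply ln_increasing; lra. }
   set (e := - ln r / 2).
   destruct (INR_archimed e P) as [M HM]. unfold e; lra.
   apply (ratio_sum _ (r * exp e) M); auto.
   + split. apply Rmult_le_pos. lra. left; apply exp_pos.
     replace (r * exp e) with (exp (ln r / 2)). rewrite <- exp_0. apply exp_increasing. lra.
     unfold e. rewrite <- (exp_ln r) at 2 by lra. rewrite <- exp_plus. f_equal. field.
   + intros m Hm. apply le_INR in Hm.
     assert (0 <= INR m) by apply pos_INR.
     rewrite S_INR. simpl.
     assert (Hl : ln (INR m + 1 + 1) <= ln (INR m + 1) + / (INR m + 1)).
     { generalize (ln_diff (INR m + 1) (INR m + 1 + 1) ltac:(lra) ltac:(lra)).
       replace ((INR m + 1 + 1) / (INR m + 1) - 1) with (/ (INR m + 1)) by (field; lra). lra. }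
     assert (HPe : P * / (INR m + 1) <= e).
     { apply Rmult_le_reg_r with (INR m + 1). lra. rewrite Rmult_assoc, Rinv_l by lra.
       assert (0 < e) by (unfold e; lra). assert (e * INR M <= e * INR m) by (apply Rmult_le_compat_l; lra). nra. }
     assert (exp (P * ln (INR m + 1 + 1)) <= exp (P * ln (INR m + 1)) * exp e).
     { rewrite <- exp_plus. apply exp_mono. nra. }
     assert (0 <= r ^ m) by (apply pow_le; lra).
     assert (0 <= r * r ^ m) by nra. nra.
Qed.

Lemma ln_nat_nonneg t : 0 <= ln (INR t + 1).
Proof. rewrite <- ln_1. apply ln_le. lra. generalize (pos_INR t); lra. Qed.

Lemma ln_nat_mono m t : ln (INR m + 1) <= ln (INR (m + t) + 1).
Proof. apply ln_le. generalize (pos_INR m); lra. rewrite plus_INR. generalize (pos_INR t); lra. Qed.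

Lemma Phi_cv k z s b j : (1 <= k)%nat -> (forall n, b <> RtoC (- INR n)) ->
  (Cmod z < 1 \/ (Cmod z = 1 /\ Re s > INR k)) -> (j <= k)%nat ->
  exists l, Ccv (fun N => boxsum j N (fun n => Cpow z n / Cpowc (RtoC (INR n) + b) s)%C) l.
Proof.
 intros H1k Hb Hz Hj.
 destruct (g_bound z s b Hb) as [K [HK Hg]].
 set (g := (fun n => Cpow z n / Cpowc (RtoC (INR n) + b) s)%C).
 assert (Hr0 : 0 <= Cmod z) by apply Cmod_ge_0.
 destruct Hz as [Hz | [Hz Hs]].
 - set (P := Rabs (Re s)).
   set (u := fun m => Cmod z ^ m * exp (P * ln (INR m + 1))).
   destruct (pgeo_sum (Cmod z) P ltac:(lra) ltac:(apply Rabs_pos)) as [U HU].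
   apply (box_cv j g (fun t => Cmod (g t)) (K * U ^ j)). intros; lra.
   intros N. apply (box_bound j u U (fun _ => u)).
   + intros m. unfold u. apply Rmult_le_pos. apply pow_le; lra. left; apply exp_pos.
   + exact HU.
   + intros _ m t. unfold u. rewrite pow_add.
     assert (exp (P * ln (INR (m + t) + 1)) <= exp (P * ln (INR m + 1)) * exp (P * ln (INR t + 1))).
     { rewrite <- exp_plus. apply exp_mono. rewrite <- Rmult_plus_distr_l. apply Rmult_le_compat_l. apply Rabs_pos.
       rewrite <- ln_mult. apply ln_le. rewrite plus_INR. generalize (pos_INR m) (pos_INR t); lra.
       rewrite plus_INR. generalize (pos_INR m) (pos_INR t); nra.
       generalize (pos_INR m); lra. generalize (pos_INR t); lra. }
     assert (0 <= Cmod z ^ m) by (apply pow_le; lra). assert (0 <= Cmod z ^ t) by (apply pow_le; lra).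
     assert (0 <= Cmod z ^ m * Cmod z ^ t) by nra.
     apply Rle_trans with (Cmod z ^ m * Cmod z ^ t * (exp (P * ln (INR m + 1)) * exp (P * ln (INR t + 1)))).
     apply Rmult_le_compat_l; auto. lra.
   + unfold u. simpl. replace (0 + 1) with 1 by ring. rewrite ln_1, Rmult_0_r, exp_0. lra.
   + exact HK.
   + intros t. eapply Rle_trans. apply Hg. apply Rmult_le_compat_l; auto. unfold u.
     apply Rmult_le_compat_l. apply pow_le; lra. apply exp_mono.
     generalize (ln_nat_nonneg t). intros. unfold P.
     destruct (Rle_dec 0 (Re s)). rewrite Rabs_right by lra. nra. rewrite Rabs_left by lra. nra.
 - assert (Hk : 0 < INR k) by (apply lt_0_INR; lia).
   set (p := Re s / INR k).
   assert (Hp : 1 < p). { unfold p. apply Rmult_lt_reg_r with (INR k); auto. unfold Rdiv.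
     rewrite Rmult_assoc, Rinv_l by lra. lra. }
   assert (HjK : INR j * p <= Re s).
   { apply le_INR in Hj. unfold p. unfold Rdiv.
     apply Rle_trans with (INR k * (Re s * / INR k)). apply Rmult_le_compat_r; auto.
     apply Rmult_le_pos. lra. left; apply Rinv_0_lt_compat; auto.
     apply Req_le. field. lra. }
   set (u := fun m => exp (- p * ln (INR m + 1))).
   set (w := fun (j : nat) t => exp (- (INR j * p) * ln (INR t + 1))).
   apply (box_cv j g (fun t => Cmod (g t)) (K * (1 + 1 / (p - 1)) ^ j)). intros; lra.
   intros N. apply (box_bound j u (1 + 1 / (p - 1)) w).
   + intros m. left; apply exp_pos.
   + intros N'. apply pser_sum; auto.
   + intros j' m t. unfold u, w. rewrite <- exp_plus. apply exp_mono. rewrite S_INR.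
     generalize (ln_nat_mono m t) (ln_nat_mono t m) (ln_nat_nonneg m) (ln_nat_nonneg t) (pos_INR j').
     rewrite (Nat.add_comm t m). intros.
     set (L := ln (INR (m + t) + 1)) in *.
     assert (0 <= p * (L - ln (INR m + 1))) by (apply Rmult_le_pos; lra).
     assert (0 <= (INR j' * p) * (L - ln (INR t + 1))) by (apply Rmult_le_pos; [apply Rmult_le_pos|]; lra).
     nra.
   + unfold w. simpl. replace (0 + 1) with 1 by ring. rewrite ln_1, Rmult_0_r, exp_0. lra.
   + exact HK.
   + intros t. eapply Rle_trans. apply Hg. apply Rmult_le_compat_l; auto. unfold w.
     rewrite Hz, pow1, Rmult_1_l. apply exp_mono.
     generalize (ln_nat_nonneg t). intros. nra.
Qed.

Lemma Ccv_Clim u l : Ccv u l -> Clim u = l.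
Proof. intros [H1 H2]. unfold Clim. rewrite (is_lim_seq_unique _ _ H1), (is_lim_seq_unique _ _ H2).
 destruct l; auto. Qed.

Lemma Ccv_shift u l : Ccv (fun N => u (S N)) l -> Ccv u l.
Proof. intros [H1 H2]; split; apply is_lim_seq_incr_1; auto. Qed.

Lemma Ccv_ext u v l : (forall N, u N = v N) -> Ccv u l -> Ccv v l.
Proof. intros E [H1 H2]; split; eapply is_lim_seq_ext; eauto; intros; simpl; rewrite E; auto. Qed.

Lemma Ccv_const c : Ccv (fun _ => c) c.
Proof. split; apply is_lim_seq_const. Qed.

Lemma Ccv_plus u v l1 l2 : Ccv u l1 -> Ccv v l2 -> Ccv (fun N => u N + v N)%C (l1 + l2)%C.
Proof. intros [H1 H2] [H3 H4]; split; simpl.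
 apply (is_lim_seq_plus' _ _ _ _ H1 H3). apply (is_lim_seq_plus' _ _ _ _ H2 H4). Qed.

Lemma Ccv_scal c u l : Ccv u l -> Ccv (fun N => c * u N)%C (c * l)%C.
Proof. intros [H1 H2]; split; simpl.
 - apply is_lim_seq_minus'; apply is_lim_seq_mult'; auto; apply is_lim_seq_const.
 - apply is_lim_seq_plus'; apply is_lim_seq_mult'; auto; apply is_lim_seq_const.
Qed.

Lemma Ccv_csum n (U : nat -> nat -> C) L : (forall i, (i < n)%nat -> Ccv (U i) (L i)) ->
  Ccv (fun N => csum n (fun i => U i N)) (csum n L).
Proof. induction n; intros H; simpl. apply Ccv_const.
 apply Ccv_plus. apply IHn; intros; apply H; lia. apply H; lia. Qed.

Lemma Phi_Ccv k z s b j : (1 <= k)%nat -> (forall n, b <> RtoC (- INR n)) ->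
  (Cmod z < 1 \/ (Cmod z = 1 /\ Re s > INR k)) -> (j <= k)%nat ->
  Ccv (fun N => boxsum j N (fun n => Cpow z n / Cpowc (RtoC (INR n) + b) s)%C) (Phi j z s b).
Proof. intros. destruct (Phi_cv k z s b j) as [l Hl]; auto.
 unfold Phi. rewrite (Ccv_Clim _ _ Hl). auto. Qed.

Open Scope C_scope.

Theorem theorem1p3 (k : nat) (z s a : C) :
  (1 <= k)%nat ->
  (forall n : nat, a <> RtoC (- INR n)) ->
  (Cmod z < 1 \/ (Cmod z = 1 /\ Re s > INR k))%R ->
  Phi k z s a =
    1 / Cpowc a s
    + csum k (fun r => RtoC (Binomial.C k r) * Cpow z (k - r)
                       * Phi (k - r) z s (a + RtoC (INR (k - r)))).
Proof.
 intros Hk Ha Hz.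
 set (G := fun b => (fun n => Cpow z n / Cpowc (RtoC (INR n) + b) s)%C).
 assert (Hv : forall j, forall n, a + RtoC (INR j) <> RtoC (- INR n)).
 { intros j n H. apply (Ha (n + j)%nat). rewrite plus_INR.
   apply injective_projections; simpl.
   - apply (f_equal fst) in H; simpl in H. lra.
   - apply (f_equal snd) in H; simpl in H. lra. }
 assert (E : forall N, boxsum k (S N) (G a) = 1 / Cpowc a s
    + csum k (fun r => RtoC (Binomial.C k r) * Cpow z (k - r) * boxsum (k - r) N (G (a + RtoC (INR (k - r)))))).
 { intros N. rewrite box_identity.
   rewrite (csum_ext (S k) _ (fun j => RtoC (Binomial.C k j) * (Cpow z j * boxsum j N (G (a + RtoC (INR j)))))).
   2:{ intros j. f_equal. rewrite <- boxsum_scal. apply boxsum_ext. intros t. unfold G.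
       rewrite Cpow_add_r.
       replace (RtoC (INR (t + j)) + a) with (RtoC (INR t) + (a + RtoC (INR j))).
       unfold Cdiv. ring.
       apply injective_projections; simpl; rewrite ?plus_INR; ring. }
   rewrite csum_rev. f_equal.
   - rewrite C_n_0. simpl. unfold G. match goal with |- context [Cpowc ?w s] => replace w with a end.
     replace (Cpow z 0) with (RtoC 1) by reflexivity.
     unfold Cdiv. ring. apply injective_projections; simpl; ring.
   - apply csum_ext_lt. intros r Hr. rewrite pascal_step1 by lia.
     replace (k - (k - r))%nat with r by lia. ring. }
 unfold Phi. apply Ccv_Clim. apply Ccv_shift.
 eapply Ccv_ext. intros N. symmetry. apply E.
 apply Ccv_plus. apply Ccv_const.
 apply Ccv_csum. intros r Hr.
 apply Ccv_scal. apply (Phi_Ccv k); auto. lia.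
Qed.
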